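(* Let $a_0,a_1,\dots$ and $b_0,b_1,\dots$ be distinct complex numbers and $\mathscr L$ a linear functional on the space of rational functions of $t$ whose poles lie in $\{a_j\}\cup\{b_j\}$. For $n\ge0$ let $\mathsf A_n,\mathsf B_n,\mathsf C_n$ be polynomials of degree $n$ such that for every polynomial $p$ of degree $<n$: $\mathscr L\big(\mathsf A_n(t)p(t)/[(t-a_0)\cdots(t-a_n)(t-b_0)\cdots(t-b_{n-1})]\big)=0$, $\mathscr L\big(\mathsf B_n(t)p(t)/[(t-a_0)\cdots(t-a_{n-1})(t-b_0)\cdots(t-b_n)]\big)=0$, $\mathscr L\big(\mathsf C_n(t)p(t)/[(t-a_0)\cdots(t-a_n)(t-b_0)\cdots(t-b_n)]\big)=0$, and assume each of these three orthogonality conditions determines its polynomial uniquely up to a constant factor. Then there are constants $\kappa_1,\kappa_2,\kappa_3$ (possibly zero) such that $$\kappa_1\mathsf A_n(t)=\frac{\mathsf C_n(b_n)\mathsf A_{n+1}(t)-\mathsf A_{n+1}(b_n)\mathsf C_n(t)}{t-b_n},\qquad \kappa_2\mathsf B_n(t)=\frac{\mathsf C_n(a_n)\mathsf B_{n+1}(t)-\mathsf B_{n+1}(a_n)\mathsf C_n(t)}{t-a_n},$$ $$\kappa_3\mathsf C_n(t)=\frac{\mathsf A_{n+1}(a_{n+1})\mathsf C_{n+1}(t)-\mathsf C_{n+1}(a_{n+1})\mathsf A_{n+1}(t)}{t-a_{n+1}},$$ the right-hand sides being polynomials in $t$. *)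

(* Defs.v *)
From HB Require Import structures.
From mathcomp Require Import all_boot all_order all_algebra.
From mathcomp Require Import reals complex.
Set Implicit Arguments. Unset Strict Implicit. Unset Printing Implicit Defensive.
Import Order.TTheory GRing.Theory Num.Theory.
Local Open Scope ring_scope.

Definition ratfun (K : fieldType) := {fraction {poly K}}.

Definition poles_in (K : fieldType) (S : K -> Prop) (f : ratfun K) : Prop :=
  exists d : seq K, (forall c, c \in d -> S c) /\
  exists q : {poly K}, f * (tofrac (\prod_(c <- d) ('X - c%:P))) = tofrac q.

Definition linear_on_poles (K : fieldType) (S : K -> Prop) (L : ratfun K -> K) : Prop :=
  (forall f g, poles_in S f -> poles_in S g -> L (f + g) = L f + L g) /\
  (forall (c : K) f, poles_in S f -> L (tofrac (c%:P) * f) = c * L f).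

Definition rf (K : fieldType) (p q : {poly K}) : ratfun K := tofrac p / tofrac q.

Definition nodes (K : fieldType) (x : nat -> K) (m : nat) : {poly K} :=
  \prod_(i < m) ('X - (x i)%:P).

Definition orth (K : fieldType) (L : ratfun K -> K) (n : nat) (den P : {poly K}) : Prop :=
  forall p : {poly K}, (size p <= n)%N -> L (rf (P * p) den) = 0.

Definition orth_unique (K : fieldType) (L : ratfun K -> K) (n : nat) (den P : {poly K}) : Prop :=
  forall Q : {poly K}, (size Q <= n.+1)%N -> orth L n den Q -> exists c : K, Q = c *: P.

(* Main.v *)
Require Import Defs.
From HB Require Import structures.
From mathcomp Require Import all_boot all_order all_algebra.
From mathcomp Require Import reals complex.
From mathcomp Require Import ring.
Import Order.TTheory GRing.Theory Num.Theory.
Local Open Scope ring_scope.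

Section Aux.
Variable K : fieldType.
Variable S : K -> Prop.

Definition gd (D : {poly K}) := exists d : seq K,
  (forall c, c \in d -> S c) /\ D = \prod_(c <- d) ('X - c%:P).

Lemma gd_neq0 D : gd D -> D != 0.
Proof. by case=> d [_ ->]; apply: monic_neq0; apply: monic_prod_XsubC. Qed.

Lemma gd_mulX D x : gd D -> S x -> gd (D * ('X - x%:P)).
Proof.
case=> d [Hd ->] Sx; exists (rcons d x); split.
  by move=> c; rewrite mem_rcons inE => /orP[/eqP->|/Hd].
by rewrite -cats1 big_cat big_seq1.
Qed.

Lemma gd_nodes (a b : nat -> K) m k :
  (forall i, S (a i)) -> (forall i, S (b i)) -> gd (nodes a m * nodes b k).
Proof.
move=> Sa Sb; exists ([seq a i | i <- iota 0 m] ++ [seq b i | i <- iota 0 k]).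
split.
  move=> c; rewrite mem_cat => /orP[] /mapP[i _ ->]; by [].
rewrite big_cat /nodes !big_map -(big_mkord xpredT (fun i => 'X - (a i)%:P))
  -(big_mkord xpredT (fun i => 'X - (b i)%:P)).
by rewrite /index_iota !subn0.
Qed.

Lemma rf_poles q D : gd D -> poles_in S (rf q D).
Proof.
move=> gD; have D0 := gd_neq0 _ gD; case: gD => d [Hd eD].
exists d; split => //; exists q; rewrite -eD /rf mulfVK //.
by rewrite tofrac_eq0.
Qed.

Lemma rf_scale (c : K) (q D : {poly K}) : tofrac c%:P * rf q D = rf (c *: q) D.
Proof. by rewrite /rf -mul_polyC tofracM mulrA. Qed.

Lemma rf_cancel (p q r : {poly K}) : r != 0 -> rf (p * r) (q * r) = rf p q.
Proof.
move=> r0; rewrite /rf !tofracM.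
have tr : tofrac r != 0 by rewrite tofrac_eq0.
by rewrite invfM mulrACA mulfV // mulr1.
Qed.

Lemma L_comb (L : ratfun K -> K) (c1 c2 : K) (U V p D : {poly K}) :
  linear_on_poles S L -> gd D ->
  L (rf ((c1 *: U - c2 *: V) * p) D) = c1 * L (rf (U * p) D) - c2 * L (rf (V * p) D).
Proof.
move=> [LD LZ] gD.
have -> : rf ((c1 *: U - c2 *: V) * p) D =
   tofrac c1%:P * rf (U * p) D + tofrac (- c2)%:P * rf (V * p) D.
  by rewrite !rf_scale /rf -mulrDl -tofracD mulrBl -!scalerAl scaleNr.
rewrite LD ?LZ; try (by rewrite ?rf_scale; apply: rf_poles).
by rewrite mulNr.
Qed.

Lemma key (L : ratfun K -> K) n (T U V D : {poly K}) x :
  linear_on_poles S L -> gd D -> S x ->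
  orth_unique L n D T ->
  (size U <= n.+2)%N -> (size V <= n.+2)%N ->
  (forall p : {poly K}, (size p <= n)%N -> L (rf (U * p) (D * ('X - x%:P))) = 0) ->
  (forall p : {poly K}, (size p <= n)%N -> L (rf (V * p) (D * ('X - x%:P))) = 0) ->
  exists k, U.[x] *: V - V.[x] *: U = k *: T * ('X - x%:P).
Proof.
move=> Lin gD Sx uT sU sV oU oV.
set Q := U.[x] *: V - V.[x] *: U.
have rQ : root Q x by rewrite /root /Q !hornerE mulrC subrr.
case/factor_theorem: rQ => q eQ.
have sQ : (size Q <= n.+2)%N.
  rewrite /Q (leq_trans (size_polyD _ _)) // geq_max size_polyN.
  by rewrite !(leq_trans (size_scale_leq _ _)).
have sq : (size q <= n.+1)%N.
  have [->|q0] := eqVneq q 0; first by rewrite size_poly0.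
  move: sQ; rewrite eQ size_mul // ?polyXsubC_eq0 // size_XsubC addn2 /=.
  by [].
have oq : orth L n D q.
  move=> p sp.
  have X0 : 'X - x%:P != 0 by rewrite polyXsubC_eq0.
  rewrite -(rf_cancel _ _ _ X0) mulrAC -eQ /Q L_comb //; last exact: gd_mulX.
  by rewrite oU // oV // !mulr0 subr0.
have [k ek] := uT q sq oq.
by exists k; rewrite -ek.
Qed.

End Aux.

Lemma nodesS (K : fieldType) (x : nat -> K) m :
  nodes x m.+1 = nodes x m * ('X - (x m)%:P).
Proof. by rewrite /nodes big_ord_recr. Qed.

Lemma orth_shift (K : fieldType) (L : ratfun K -> K) n (E P p : {poly K}) y :
  orth L n.+1 (E * ('X - y%:P)) P -> (size p <= n)%N -> L (rf (P * p) E) = 0.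
Proof.
move=> oP sp.
have X0 : 'X - y%:P != 0 by rewrite polyXsubC_eq0.
rewrite -(@rf_cancel K (P * p) E _ X0) -mulrA; apply: oP.
rewrite (leq_trans (size_mul_leq _ _)) // size_XsubC addn2 /=.
by [].
Qed.

Theorem mainTheorem11 (R : realType) (a b : nat -> R[i])
  (L : ratfun R[i] -> R[i]) (A B C : nat -> {poly R[i]}) :
  injective a -> injective b -> (forall i j, a i <> b j) ->
  linear_on_poles (fun c => exists j, c = a j \/ c = b j) L ->
  (forall n, size (A n) = n.+1) ->
  (forall n, size (B n) = n.+1) ->
  (forall n, size (C n) = n.+1) ->
  (forall n, orth L n (nodes a n.+1 * nodes b n) (A n)) ->
  (forall n, orth L n (nodes a n * nodes b n.+1) (B n)) ->
  (forall n, orth L n (nodes a n.+1 * nodes b n.+1) (C n)) ->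
  (forall n, orth_unique L n (nodes a n.+1 * nodes b n) (A n)) ->
  (forall n, orth_unique L n (nodes a n * nodes b n.+1) (B n)) ->
  (forall n, orth_unique L n (nodes a n.+1 * nodes b n.+1) (C n)) ->
  forall n : nat,
    (exists k1 : R[i],
        (C n).[b n] *: A n.+1 - (A n.+1).[b n] *: C n = k1 *: A n * ('X - (b n)%:P)) /\
    (exists k2 : R[i],
        (C n).[a n] *: B n.+1 - (B n.+1).[a n] *: C n = k2 *: B n * ('X - (a n)%:P)) /\
    (exists k3 : R[i],
        (A n.+1).[a n.+1] *: C n.+1 - (C n.+1).[a n.+1] *: A n.+1
          = k3 *: C n * ('X - (a n.+1)%:P)).
Proof.
move=> _ _ _ Lin sA sB sC oA oB oC uA uB uC n.
set S := (fun c => exists j, c = a j \/ c = b j).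
have Sa : forall j, S (a j) by move=> j; exists j; left.
have Sb : forall j, S (b j) by move=> j; exists j; right.
have gdn : forall m k : nat, @gd _ S (nodes a m * nodes b k) by move=> m k; apply: gd_nodes; [exact: Sa|exact: Sb].
split; [|split].
- apply: (@key _ S L n _ _ _ _ _ Lin (gdn _ _) (Sb n) (uA n)); rewrite ?sA ?sC //.
  + by move=> p sp; rewrite -mulrA -nodesS; apply: oC.
  + move=> p sp; rewrite -mulrA -nodesS; apply: (@orth_shift _ L n _ _ p (a n.+1)) => //.
    by rewrite mulrAC -nodesS; apply: oA.
- apply: (@key _ S L n _ _ _ _ _ Lin (gdn _ _) (Sa n) (uB n)); rewrite ?sB ?sC //.
  + by move=> p sp; rewrite mulrAC -nodesS; apply: oC.
  + move=> p sp; rewrite mulrAC -nodesS; apply: (@orth_shift _ L n _ _ p (b n.+1)) => //.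
    by rewrite -mulrA -nodesS; apply: oB.
- apply: (@key _ S L n _ _ _ _ _ Lin (gdn _ _) (Sa n.+1) (uC n)); rewrite ?sA ?sC //.
  + move=> p sp; rewrite mulrAC -nodesS; apply: oA.
    exact: leq_trans sp _.
  + move=> p sp; rewrite mulrAC -nodesS; apply: (@orth_shift _ L n _ _ p (b n.+1)) => //.
    by rewrite -mulrA -nodesS; apply: oC.
Qed.
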